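(* ATL and rCTL are incomparable in expressiveness: (i) there is an ATL formula $\psi$ such that for no rCTL formula $\chi$ and truth value $u\in\mathbb{B}_4$ does it hold that $\mathcal{S},s\models\psi\iff V_{rCTL}(s,\chi)\succeq u$ for all concurrent game structures $\mathcal{S}$ and states $s$ (with $V_{rCTL}$ evaluated in the underlying Kripke structure of $\mathcal{S}$); and (ii) there are an rCTL formula $\chi$ and a truth value $u\in\mathbb{B}_4$ such that for no ATL formula $\psi$ does it hold that $\mathcal{S}_\mathcal{K},s\models\psi\iff V_{rCTL}(s,\chi)\succeq u$ for all Kripke structures $\mathcal{K}$ and states $s$.
   Context: Fix a finite set $\mathrm{AP}$ of atomic propositions. A concurrent game structure (CGS) is a tuple $\mathcal{S}=(St,Ag,Ac,\delta,\ell)$ where $St$ is a finite set of states, $Ag$ a finite set of agents, $Ac$ a finite set of actions, $\ell:St\to 2^{\mathrm{AP}}$ a labeling, and $\delta:St\times AV\to St$ a transition function, where $AV$ is the set of action vectors for $Ag$ (an action vector for $A\subseteq Ag$ is a map $A\to Ac$). A state $s'$ is a successor of $s$ if $s'=\delta(s,v)$ for some $v\in AV$. A path is an infinite sequence $\pi=s_0s_1s_2\cdots$ of states with $s_{n+1}$ a successor of $s_n$ for all $n$; write $\pi[n]=s_n$. A strategy for an agent is a function $f:St^+\to Ac$. For $A\subseteq Ag$ and a set $F_A=\{f_a\mid a\in A\}$ of strategies, one for each agent in $A$, $out(s,F_A)$ is the set of paths $s_0s_1\cdots$ with $s_0=s$ such that for every $n\ge 0$ there is $v\in AV$ with $v(a)=f_a(s_0\cdots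 s_n)$ for all $a\in A$ and $s_{n+1}=\delta(s_n,v)$. $\mathbb{B}_4=\{1111,0111,0011,0001,0000\}$ is totally ordered by $1111\succ0111\succ0011\succ0001\succ0000$; for $b=b_1b_2b_3b_4\in\mathbb{B}_4$ and $k\in\{1,2,3,4\}$, $b[k]=b_k$; max and min on $\mathbb{B}_4$ refer to this order, and on bits to $0<1$. ATL formulas: state formulas $\varphi::=p\mid\neg\varphi\mid\varphi\vee\varphi\mid\varphi\wedge\varphi\mid\varphi\to\varphi\mid\langle\!\langle A\rangle\!\rangle\Phi\mid[\![A]\!]\Phi$ and path formulas $\Phi::=\bigcirc\varphi\mid\Diamond\varphi\mid\Box\varphi$, with the standard Boolean semantics: $\mathcal{S},s\models p$ iff $p\in\ell(s)$; Boolean connectives as usual; $\mathcal{S},s\models\langle\!\langle A\rangle\!\rangle\Phi$ iff there is a set $F_A$ of strategies (one per agent in $A$) with $\mathcal{S},\pi\models\Phi$ for all $\pi\in out(s,F_A)$; $\mathcal{S},s\models[\![A]\!]\Phi$ iff for every such $F_A$ some $\pi\in out(s,F_A)$ satisfies $\mathcal{S},\pi\models\Phi$; $\mathcal{S},\pi\models\bigcirc\varphi$ iff $\mathcal{S},\pi[1]\models\varphi$; $\mathcal{S},\pi\models\Diamond\varphi$ iff $\mathcal{S},\pi[i]\models\varphi$ for some $i\ge0$; $\mathcal{S},\pi\models\Box\varphi$ iff $\mathcal{S},\pi[i]\models\varphi$ for all $i\ge0$. A Kripke structure is $\mathcal{K}=(S,I,R,L)$ with finite state set $S$, initial states $I\subseteq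 S$, transition relation $R\subseteq S\times S$ such that every state has an $R$-successor, and labeling $L:S\to2^{\mathrm{AP}}$; a path is an infinite sequence $s_0s_1\cdots$ with $(s_i,s_{i+1})\in R$; $\mathit{paths}(s)$ is the set of paths starting in $s$. rCTL formulas: state formulas $\varphi::=p\mid\neg\varphi\mid\varphi\vee\varphi\mid\varphi\wedge\varphi\mid\varphi\to\varphi\mid\exists\Phi\mid\forall\Phi$, path formulas $\Phi::=\dot\bigcirc\varphi\mid\dot\Diamond\varphi\mid\dot\Box\varphi$. The valuation $V_{rCTL}$ into $\mathbb{B}_4$: $V_{rCTL}(s,p)=1111$ if $p\in L(s)$, else $0000$; $\vee,\wedge$ are max, min; $V_{rCTL}(s,\neg\varphi)=0000$ if $V_{rCTL}(s,\varphi)=1111$, else $1111$; $V_{rCTL}(s,\varphi_1\to\varphi_2)=1111$ if $V_{rCTL}(s,\varphi_1)\preceq V_{rCTL}(s,\varphi_2)$, else $V_{rCTL}(s,\varphi_2)$; $V_{rCTL}(s,\exists\Phi)=\max_{\pi\in\mathit{paths}(s)}V_{rCTL}(\pi,\Phi)$, $V_{rCTL}(s,\forall\Phi)=\min_{\pi\in\mathit{paths}(s)}V_{rCTL}(\pi,\Phi)$; $V_{rCTL}(\pi,\dot\bigcirc\varphi)=V_{rCTL}(\pi[1],\varphi)$; $V_{rCTL}(\pi,\dot\Diamond\varphi)[k]=\max_{i\ge0}V_{rCTL}(\pi[i],\varphi)[k]$; $V_{rCTL}(\pi,\dot\Box\varphi)=b_1b_2b_3b_4$ with $b_1=\min_{i}V_{rCTL}(\pi[i],\varphi)[1]$,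 $b_2=\max_{i}\min_{j\ge i}V_{rCTL}(\pi[j],\varphi)[2]$, $b_3=\min_{i}\max_{j\ge i}V_{rCTL}(\pi[j],\varphi)[3]$, $b_4=\max_{i}V_{rCTL}(\pi[i],\varphi)[4]$. The underlying Kripke structure of a CGS $\mathcal{S}$ has the same states and labeling, with $R=\{(s,s')\mid s'\text{ is a successor of }s\}$. The CGS associated with $\mathcal{K}$ is $\mathcal{S}_\mathcal{K}=(S,\{a\},S,\delta,L)$ with a single agent $a$, actions $S$, and $\delta(s,s')=s'$ if $(s,s')\in R$, and $\delta(s,s')=s''$ for some fixed $s''$ with $(s,s'')\in R$ otherwise. *)

(* Defs.v *)
From mathcomp Require Import all_boot.
From mathcomp Require Import boolp.

Set Implicit Arguments.
Unset Strict Implicit.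
Unset Printing Implicit Defensive.

Inductive B4 : Type := B1111 | B0111 | B0011 | B0001 | B0000.

Definition B4rank (b : B4) : nat :=
  match b with B1111 => 4 | B0111 => 3 | B0011 => 2 | B0001 => 1 | B0000 => 0 end.

Definition B4le (u v : B4) : bool := B4rank u <= B4rank v.

Definition B4max (u v : B4) : B4 := if B4le u v then v else u.
Definition B4min (u v : B4) : B4 := if B4le u v then u else v.

Definition B4bit (b : B4) (k : nat) : bool :=
  match b, k with
  | B1111, _ => true
  | B0111, 1 => false | B0111, _ => true
  | B0011, 1 => false | B0011, 2 => false | B0011, _ => true
  | B0001, 4 => true  | B0001, _ => false
  | B0000, _ => false
  end.

(* the element b1b2b3b4 of B4 with the given bits (for monotone bit
   vectors b1 <= b2 <= b3 <= b4, which is the only case arising) *)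
Definition B4of (b1 b2 b3 b4 : bool) : B4 :=
  if b1 then B1111 else if b2 then B0111 else if b3 then B0011
  else if b4 then B0001 else B0000.

Definition B4sup (P : B4 -> Prop) : B4 :=
  if `[< P B1111 >] then B1111 else if `[< P B0111 >] then B0111
  else if `[< P B0011 >] then B0011 else if `[< P B0001 >] then B0001
  else B0000.
Definition B4inf (P : B4 -> Prop) : B4 :=
  if `[< P B0000 >] then B0000 else if `[< P B0001 >] then B0001
  else if `[< P B0011 >] then B0011 else if `[< P B0111 >] then B0111
  else B1111.

Definition natmax (f : nat -> bool) : bool := `[< exists i, f i >].
Definition natmin (f : nat -> bool) : bool := `[< forall i, f i >].

Section Syntax.
Variable AP : Type.

Inductive atl : Type :=
  | Aprop of AP
  | Aneg of atl
  | Aor of atl & atl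
  | Aand of atl & atl
  | Aimp of atl & atl
  | Acoal of seq nat & atl_path
  | Adual of seq nat & atl_path
with atl_path : Type :=
  | Anext of atl
  | Aev of atl
  | Aalw of atl.

Fixpoint atl_agents (f : atl) : seq nat :=
  match f with
  | Aprop _ => [::]
  | Aneg g => atl_agents g
  | Aor g h | Aand g h | Aimp g h => atl_agents g ++ atl_agents h
  | Acoal A P | Adual A P => A ++ atlp_agents P
  end
with atlp_agents (P : atl_path) : seq nat :=
  match P with Anext g | Aev g | Aalw g => atl_agents g end.

Inductive rctl : Type :=
  | Rprop of AP
  | Rneg of rctl
  | Ror of rctl & rctl
  | Rand of rctl & rctl
  | Rimp of rctl & rctl
  | Rex of rctl_path
  | Rall of rctl_path
with rctl_path : Type :=
  | Rnext of rctl
  | Rev of rctl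
  | Ralw of rctl.

End Syntax.

Section Models.
Variable AP : finType.

Record cgs : Type := CGS {
  St : finType;
  Ag : finType;
  agname : Ag -> nat;
  agname_inj : injective agname;
  Ac : finType;
  delta : St -> {ffun Ag -> Ac} -> St;
  ell : St -> {set AP}
}.

Definition successor (S : cgs) (s s' : St S) : bool :=
  [exists v : {ffun Ag S -> Ac S}, delta s v == s'].

Definition cgs_total (S : cgs) : Prop := forall s : St S, exists s', successor s s'.

Definition atl_over (S : cgs) (psi : atl AP) : Prop :=
  {subset atl_agents psi <= codom (@agname S)}.

Section ATLsem.
Variable S : cgs.

Definition coal (A : seq nat) : pred (Ag S) := fun a => agname a \in A.

Definition hist (pi : nat -> St S) (n : nat) : seq (St S) :=
  [seq pi i | i <- iota 0 n.+1].

(* strategies St^+ -> Ac, one for every agent (only those in A matter) *)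
Definition out (s : St S) (A : pred (Ag S)) (F : Ag S -> seq (St S) -> Ac S)
    (pi : nat -> St S) : Prop :=
  pi 0 = s /\
  forall n, exists v : {ffun Ag S -> Ac S},
    (forall a, A a -> v a = F a (hist pi n)) /\ pi n.+1 = delta (pi n) v.

Fixpoint sat (s : St S) (f : atl AP) {struct f} : Prop :=
  match f with
  | Aprop p => p \in ell s
  | Aneg g => ~ sat s g
  | Aor g h => sat s g \/ sat s h
  | Aand g h => sat s g /\ sat s h
  | Aimp g h => sat s g -> sat s h
  | Acoal A P => exists F, forall pi, out s (coal A) F pi -> psat pi P
  | Adual A P => forall F, exists pi, out s (coal A) F pi /\ psat pi P
  end
with psat (pi : nat -> St S) (P : atl_path AP) {struct P} : Prop :=
  match P with
  | Anext g => sat (pi 1) g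
  | Aev g => exists i, sat (pi i) g
  | Aalw g => forall i, sat (pi i) g
  end.

End ATLsem.

Record kripke : Type := Kripke {
  kS : finType;
  kI : {set kS};
  kR : rel kS;
  kL : kS -> {set AP}
}.

Definition kripke_total (K : kripke) : Prop := forall s, exists s', @kR K s s'.

Section rCTLsem.
Variable K : kripke.

Definition kpath (pi : nat -> kS K) : Prop := forall n, @kR K (pi n) (pi n.+1).

Fixpoint Vr (s : kS K) (f : rctl AP) {struct f} : B4 :=
  match f with
  | Rprop p => if p \in @kL K s then B1111 else B0000
  | Rneg g => match Vr s g with B1111 => B0000 | _ => B1111 end
  | Ror g h => B4max (Vr s g) (Vr s h)
  | Rand g h => B4min (Vr s g) (Vr s h)
  | Rimp g h => if B4le (Vr s g) (Vr s h) then B1111 else Vr s h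
  | Rex P => B4sup (fun b => exists pi, [/\ kpath pi, pi 0 = s & Vp pi P = b])
  | Rall P => B4inf (fun b => exists pi, [/\ kpath pi, pi 0 = s & Vp pi P = b])
  end
with Vp (pi : nat -> kS K) (P : rctl_path AP) {struct P} : B4 :=
  match P with
  | Rnext g => Vr (pi 1) g
  | Rev g =>
      let f k i := B4bit (Vr (pi i) g) k in
      B4of (natmax (f 1)) (natmax (f 2)) (natmax (f 3)) (natmax (f 4))
  | Ralw g =>
      let f k i := B4bit (Vr (pi i) g) k in
      B4of (natmin (f 1))
           (natmax (fun i => natmin (fun j => (i <= j) ==> f 2 j)))
           (natmin (fun i => natmax (fun j => (i <= j) && f 3 j)))
           (natmax (f 4))
  end.

End rCTLsem.

Definition kripke_of_cgs (S : cgs) : kripke :=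
  {| kS := St S; kI := setT; kR := @successor S; kL := @ell S |}.

Definition unit_name (_ : unit) : nat := 0.
Lemma unit_name_inj : injective unit_name.
Proof. by case; case. Qed.

Definition kchoice (K : kripke) (s : kS K) : kS K :=
  odflt s [pick s' | @kR K s s'].

Definition cgs_of_kripke (K : kripke) : cgs :=
  {| St := kS K; Ag := unit; agname := unit_name; agname_inj := unit_name_inj;
     Ac := kS K;
     delta := fun s (v : {ffun unit -> kS K}) =>
                if @kR K s (v tt) then v tt else kchoice s;
     ell := @kL K |}.

End Models.

Arguments Vr {AP} K s f.
Arguments Vp {AP} K pi P.

(* Main.v *)
Require Import Defs.
From mathcomp Require Import all_boot.
From mathcomp Require Import boolp.
From mathcomp Require Import zify.
Set Implicit Arguments. Unset Strict Implicit. Unset Printing Implicit Defensive.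

Section Gen.
Variable AP : finType.
Variable K : kripke AP.
Hypothesis Ktot : kripke_total K.

Definition Ex (x : kS K) (P : (nat -> kS K) -> Prop) :=
  exists pi, [/\ kpath pi, pi 0 = x & P pi].
Definition All (x : kS K) (P : (nat -> kS K) -> Prop) :=
  forall pi, kpath pi -> pi 0 = x -> P pi.

Lemma kchoiceP (s : kS K) : kR s (kchoice s).
Proof.
rewrite /kchoice; case: pickP => [y //|H].
have [y Hy] := Ktot s. by rewrite H in Hy.
Qed.

Lemma deltaR s v : kR s (@delta AP (cgs_of_kripke K) s v).
Proof. rewrite /=; case: ifP => // _; exact: kchoiceP. Qed.

Fixpoint hs (x : kS K) (F : unit -> seq (kS K) -> kS K) (n : nat) : seq (kS K) :=
  match n with
  | 0 => [:: x]
  | m.+1 => rcons (hs x F m)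
      (@delta AP (cgs_of_kripke K) (last x (hs x F m)) [ffun _ => F tt (hs x F m)])
  end.

Lemma size_hs x F n : size (hs x F n) = n.+1.
Proof. by elim: n => //= n IH; rewrite size_rcons IH. Qed.

Lemma nth_hs x F n i : i <= n -> nth x (hs x F n) i = last x (hs x F i).
Proof.
elim: n i => [|n IH] i.
  by rewrite leqn0 => /eqP ->.
rewrite leq_eqVlt => /orP [/eqP ->|Hi].
  by rewrite /= nth_rcons size_hs ltnn eqxx last_rcons.
by rewrite /= nth_rcons size_hs Hi IH.
Qed.

Lemma hist_hs x F n :
  hist (S:=cgs_of_kripke K) (fun m => last x (hs x F m)) n = hs x F n.
Proof.
apply: (@eq_from_nth _ x); first by rewrite size_map size_iota size_hs.
move=> i; rewrite size_map size_iota => Hi.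
by rewrite (nth_map 0) ?size_iota // nth_iota // add0n nth_hs.
Qed.

Lemma out_hs x A F :
  out (S:=cgs_of_kripke K) x A F (fun m => last x (hs x F m)).
Proof.
split => // n; exists [ffun _ => F tt (hs x F n)]; split.
  by case=> _; rewrite ffunE hist_hs.
by rewrite /= last_rcons.
Qed.

Lemma out_kpath x A F pi : out (S:=cgs_of_kripke K) x A F pi -> kpath pi /\ pi 0 = x.
Proof.
case=> H0 H; split => // n; have [v [_ ->]] := H n; exact: deltaR.
Qed.

Lemma kpath_out0 x A F pi : 0 \notin A -> kpath pi -> pi 0 = x ->
  out (S:=cgs_of_kripke K) x (coal A) F pi.
Proof.
move=> HA kp H0; split => // n; exists [ffun _ => pi n.+1]; split.
  by case; rewrite /coal /= (negbTE HA).
by rewrite /= ffunE kp.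
Qed.

Lemma out1_eq x A pi0 pi : 0 \in A -> kpath pi0 -> pi0 0 = x ->
  out (S:=cgs_of_kripke K) x (coal A) (fun _ h => pi0 (size h)) pi -> pi = pi0.
Proof.
move=> HA kp H0 [P0 H]; apply: funext; elim => [|n IH]; first by rewrite P0.
have [v [Hv ->]] := H n.
have -> : v = [ffun _ => pi0 n.+1].
  apply/ffunP; case; rewrite ffunE Hv; last by rewrite /coal /= HA.
  by rewrite size_map size_iota.
by rewrite /= ffunE IH kp.
Qed.

Lemma coal_in x A P : 0 \in A ->
  ((exists F, forall pi, out (S:=cgs_of_kripke K) x (coal A) F pi -> P pi) <-> Ex x P).
Proof.
move=> HA; split.
  move=> [F HF]; have Ho := out_hs x (coal A) F.
  have [kp p0] := out_kpath Ho.
  by exists (fun m => last x (hs x F m)); split => //; apply: HF.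
move=> [pi0 [kp p0 HP]]; exists (fun _ h => pi0 (size h)) => pi Ho.
by rewrite (out1_eq HA kp p0 Ho).
Qed.

Lemma coal_out x A P : 0 \notin A ->
  ((exists F, forall pi, out (S:=cgs_of_kripke K) x (coal A) F pi -> P pi) <-> All x P).
Proof.
move=> HA; split.
  by move=> [F HF] pi kp p0; apply: HF; apply: kpath_out0.
move=> H; exists (fun _ _ => x) => pi Ho; have [kp p0] := out_kpath Ho; exact: H.
Qed.

Lemma dual_in x A P : 0 \in A ->
  ((forall F, exists pi, out (S:=cgs_of_kripke K) x (coal A) F pi /\ P pi) <-> All x P).
Proof.
move=> HA; split.
  move=> H pi0 kp p0; have [pi [Ho HP]] := H (fun _ h => pi0 (size h)).
  by rewrite -(out1_eq HA kp p0 Ho).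
move=> H F; have Ho := out_hs x (coal A) F.
have [kp p0] := out_kpath Ho.
by exists (fun m => last x (hs x F m)); split => //; apply: H.
Qed.

Lemma dual_out x A P : 0 \notin A ->
  ((forall F, exists pi, out (S:=cgs_of_kripke K) x (coal A) F pi /\ P pi) <-> Ex x P).
Proof.
move=> HA; split.
  move=> H; have [pi [Ho HP]] := H (fun _ _ => x); have [kp p0] := out_kpath Ho.
  by exists pi.
move=> [pi0 [kp p0 HP]] F; exists pi0; split => //; exact: kpath_out0.
Qed.

Definition ipath (y : kS K) := fun n => iter n (@kchoice AP K) y.
Lemma ipathP y : kpath (ipath y).
Proof. move=> n; rewrite /ipath iterS; exact: kchoiceP. Qed.
Definition pcons (x : kS K) (pi : nat -> kS K) := fun n => if n is m.+1 then pi m else x.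
Lemma pconsP x pi : kR x (pi 0) -> kpath pi -> kpath (pcons x pi).
Proof. by move=> h kp; case. Qed.

Lemma Ex_ext x P P' : (forall pi, P pi <-> P' pi) -> (Ex x P <-> Ex x P').
Proof. by move=> H; split => -[pi [a b c]]; exists pi; split => //; apply/H. Qed.

Lemma All_Ex x P : All x P <-> ~ Ex x (fun pi => ~ P pi).
Proof.
split; first by move=> H [pi [kp p0 HP]]; apply: HP; apply: H.
by move=> H pi kp p0; apply: contrapT => HP; apply: H; exists pi.
Qed.

Lemma ExX x Q : Ex x (fun pi => Q (pi 1)) <-> exists y, kR x y /\ Q y.
Proof.
split; first by move=> [pi [kp p0 HQ]]; exists (pi 1); rewrite -p0.
move=> [y [xy Qy]]; exists (pcons x (ipath y)); split => //.
exact: pconsP (ipathP y).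
Qed.

Lemma ExG_loop x Q : kR x x -> (Ex x (fun pi => forall i, Q (pi i)) <-> Q x).
Proof.
move=> xx; split; first by move=> [pi [kp <- HQ]].
by move=> Qx; exists (fun _ => x); split => //; move=> n.
Qed.

Lemma shiftP (pi : nat -> kS K) : kpath pi -> kpath (fun n => pi n.+1).
Proof. by move=> kp n; apply: kp. Qed.

Lemma ExG_uniq x t Q : (forall y, kR x y -> y = t) -> kR x t ->
  (Ex x (fun pi => forall i, Q (pi i)) <-> Q x /\ Ex t (fun pi => forall i, Q (pi i))).
Proof.
move=> U xt; split.
  move=> [pi [kp p0 HQ]]; split; first by rewrite -p0.
  exists (fun n => pi n.+1); split => //.
  by apply: U; rewrite -p0; apply: kp.
move=> [Qx [pi [kp p0 HQ]]]; exists (pcons x pi); split => //.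
  by apply: pconsP => //; rewrite p0.
by case.
Qed.

Lemma ExF_base x Q : Q x -> Ex x (fun pi => exists i, Q (pi i)).
Proof. by move=> Qx; exists (ipath x); split => //; [exact: ipathP| exists 0]. Qed.

Lemma ExF_step x y Q : kR x y -> Ex y (fun pi => exists i, Q (pi i)) ->
  Ex x (fun pi => exists i, Q (pi i)).
Proof.
move=> xy [pi [kp p0 [i Hi]]]; exists (pcons x pi); split => //.
  by apply: pconsP => //; rewrite p0.
by exists i.+1.
Qed.

Lemma ExF_uniq x t Q : (forall y, kR x y -> y = t) -> kR x t ->
  (Ex x (fun pi => exists i, Q (pi i)) <-> Q x \/ Ex t (fun pi => exists i, Q (pi i))).
Proof.
move=> U xt; split.
  move=> [pi [kp p0 [[|i] Hi]]]; first by left; rewrite -p0.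
  right; exists (fun n => pi n.+1); split => //.
    by apply: U; rewrite -p0; apply: kp.
  by exists i.
by case=> [/ExF_base //|]; apply: ExF_step.
Qed.

Lemma ExF_closed (S : kS K -> Prop) x Q : (forall u v, S u -> kR u v -> S v) -> S x ->
  Ex x (fun pi => exists i, Q (pi i)) -> exists y, S y /\ Q y.
Proof.
move=> cl Sx [pi [kp p0 [i Hi]]]; exists (pi i); split => //.
elim: i {Hi} => [|i IH]; first by rewrite p0.
exact: cl IH (kp i).
Qed.

End Gen.

Section Spec.
Variable AP : finType.
Variable p0 : AP.
Variable n : nat.

Definition stN : finType := (bool * 'I_n.+2)%type.
Definition tgt (j : nat) := if j == n.+1 then n.+1 else j.-1.
Definition RN (x y : stN) : bool :=
  if x.1 then ~~ y.1 && (val y.2 == tgt (val x.2))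
  else if y.1 then (val y.2 == val x.2) && (0 < val x.2)
  else (val y.2 == val x.2) || (val y.2 == (val x.2).-1).
Definition LN (x : stN) : {set AP} := if x.1 then [set p0] else set0.
Definition KN : kripke AP := {| kS := stN; kI := setT; kR := RN; kL := LN |}.

Definition a j : stN := (false, inord j).
Definition b j : stN := (true, inord j).

Lemma tgt_le j : j <= n.+1 -> tgt j <= j.
Proof. rewrite /tgt; case: eqP => ?; lia. Qed.

Lemma RN_aa j : j <= n.+1 -> RN (a j) (a j).
Proof. by move=> h; rewrite /RN /= eqxx. Qed.
Lemma RN_aprev j : j <= n.+1 -> RN (a j) (a j.-1).
Proof. move=> h; rewrite /RN /= !inordK; [by rewrite eqxx orbT| lia| lia]. Qed.
Lemma RN_ab j : 0 < j -> j <= n.+1 -> RN (a j) (b j).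
Proof. by move=> h0 h; rewrite /RN /= inordK // eqxx. Qed.
Lemma RN_b j : j <= n.+1 -> RN (b j) (a (tgt j)).
Proof.
move=> h; rewrite /RN /= !inordK ?eqxx //; have := tgt_le h; lia.
Qed.

Lemma stE (y : stN) : y = (y.1, inord (val y.2)).
Proof. by case: y => c i; rewrite inord_val. Qed.

Lemma ordE (i : 'I_n.+2) j : val i = j -> i = inord j.
Proof. by move=> <-; rewrite inord_val. Qed.

Lemma RN_a_inv j y : j <= n.+1 -> RN (a j) y ->
  y = a j \/ y = a j.-1 \/ (0 < j /\ y = b j).
Proof.
move=> h; case: y => c i; rewrite /RN /= inordK //; case: c => /=.
  by case/andP => /eqP /ordE -> ->; right; right.
by case/orP => /eqP /ordE ->; [left| right; left].
Qed.

Lemma RN_b_inv j y : j <= n.+1 -> RN (b j) y -> y = a (tgt j).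
Proof.
move=> h; case: y => c i; rewrite /RN /= inordK //; case: c => //=.
by move=> /eqP /ordE ->.
Qed.

Lemma KN_total : kripke_total KN.
Proof.
case=> [[] i].
  exists (a (tgt i)); have -> : (true, i) = b i by rewrite /b inord_val.
  exact: RN_b (ltn_ord i).
exists (a i); have -> : (false, i) = a i by rewrite /a inord_val.
exact: RN_aa (ltn_ord i).
Qed.

Definition Inv N (Q : stN -> Prop) := forall j, N < j <= n.+1 ->
  (Q (a j) <-> Q (a n.+1)) /\ (Q (b j) <-> Q (b n.+1)).

Lemma Inv_mono N M Q : N <= M -> Inv N Q -> Inv M Q.
Proof. move=> NM H j hj; apply: H; lia. Qed.

Lemma Inv_ext N Q Q' : (forall x, Q x <-> Q' x) -> Inv N Q -> Inv N Q'.
Proof. move=> E H j hj; rewrite -!E; exact: H. Qed.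

Lemma Inv_neg N Q : Inv N Q -> Inv N (fun x => ~ Q x).
Proof. by move=> H j hj; have [[? ?] [? ?]] := H j hj; split; split; auto. Qed.

Lemma Inv_bin N M Q Q' (op : Prop -> Prop -> Prop) :
  (forall A A' B B', (A <-> A') -> (B <-> B') -> (op A B <-> op A' B')) ->
  Inv N Q -> Inv M Q' -> Inv (maxn N M) (fun x => op (Q x) (Q' x)).
Proof.
move=> opE H H' j hj.
have [h1 h2] := H j ltac:(lia); have [h3 h4] := H' j ltac:(lia).
by split; apply: opE.
Qed.

Lemma Inv_EX N Q : Inv N Q -> Inv N.+1 (fun x => exists y, RN x y /\ Q y).
Proof.
move=> H.
have Ha : forall j, N.+1 < j <= n.+1 ->
   ((exists y, RN (a j) y /\ Q y) <-> Q (a n.+1) \/ Q (b n.+1)).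
  move=> j hj; split.
    move=> [y [r q]]; case: (@RN_a_inv j y ltac:(lia) r) => [E|[E|[_ E]]]; subst y.
    - by left; apply/(H j ltac:(lia)).1.
    - by left; apply/(H j.-1 ltac:(lia)).1.
    - by right; apply/(H j ltac:(lia)).2.
  case=> q.
    by exists (a j); split; [apply: RN_aa; lia| apply/(H j ltac:(lia)).1].
  by exists (b j); split; [apply: RN_ab; lia| apply/(H j ltac:(lia)).2].
have Hb : forall j, N.+1 < j <= n.+1 ->
   ((exists y, RN (b j) y /\ Q y) <-> Q (a n.+1)).
  move=> j hj; have ht : N < tgt j <= n.+1 by rewrite /tgt; case: eqP => ?; lia.
  split.
    by move=> [y [r q]]; rewrite (RN_b_inv _ r) in q; [apply/(H _ ht).1 | lia].
  by move=> q; exists (a (tgt j)); split; [apply: RN_b; lia| apply/(H _ ht).1].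
move=> j hj; rewrite !Ha ?Hb //; lia.
Qed.

Lemma Inv_EG N Q : Inv N Q ->
  Inv N.+1 (fun x => @Ex AP KN x (fun pi => forall i, Q (pi i))).
Proof.
move=> H.
have Ha : forall j, j <= n.+1 ->
   (@Ex AP KN (a j) (fun pi => forall i, Q (pi i)) <-> Q (a j)).
  by move=> j hj; apply: ExG_loop; exact: RN_aa.
have Hb : forall j, j <= n.+1 ->
   (@Ex AP KN (b j) (fun pi => forall i, Q (pi i)) <-> Q (b j) /\ Q (a (tgt j))).
  move=> j hj; rewrite (@ExG_uniq _ KN _ (a (tgt j))); last exact: RN_b.
    by rewrite Ha //; have := tgt_le hj; rewrite /tgt; case: eqP => ?; lia.
  by move=> y; apply: RN_b_inv.
move=> j hj; have ht : N < tgt j <= n.+1 by rewrite /tgt; case: eqP => ?; lia.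
have ht' : N < tgt n.+1 <= n.+1 by rewrite /tgt eqxx; lia.
rewrite !Ha ?Hb; try lia.
have [h1 h5] := H j ltac:(lia). have [h2 h3] := H (tgt j) ht.
have [h4 _] := H _ ht'. move: h1 h2 h3 h4 h5; clear; tauto.
Qed.

Definition Rj j (y : stN) : Prop := val y.2 <= j /\ (y.1 -> 0 < val y.2).

Lemma Rj_closed j : forall u v, Rj j u -> RN u v -> Rj j v.
Proof.
case=> c i v [/= h1 h2] r; have hi := ltn_ord i.
case: c h2 r => h2 r.
  have E : (true, i) = b i by rewrite /b inord_val.
  rewrite E in r; rewrite (RN_b_inv hi r) /Rj /= inordK; have := tgt_le hi; try lia.
have E : (false, i) = a i by rewrite /a inord_val.
rewrite E in r; case: (RN_a_inv hi r) => [->|[->|[h0 ->]]]; rewrite /Rj /= inordK //; lia.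
Qed.

Lemma EF_climb Q k j : k <= j -> j <= n.+1 ->
  @Ex AP KN (a k) (fun pi => exists i, Q (pi i)) ->
  @Ex AP KN (a j) (fun pi => exists i, Q (pi i)).
Proof.
move=> kj hj H; elim: j kj hj => [|j IH] kj hj.
  have E : k = 0 by lia. rewrite E in H. exact H.
case: (ltngtP k j.+1) => [hk|hk|<-] //; last by lia.
apply: (@ExF_step _ KN _ (a j)); first by have := RN_aprev hj.
apply: IH; lia.
Qed.

Lemma EFa_char Q j : j <= n.+1 ->
  (@Ex AP KN (a j) (fun pi => exists i, Q (pi i)) <-> exists y, Rj j y /\ Q y).
Proof.
move=> hj; split.
  apply: ExF_closed; first exact: Rj_closed.
  by rewrite /Rj /= inordK.
case=> -[c i] [[/= h1 h2] q]; have hi := ltn_ord i.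
apply: (@EF_climb Q i) => //.
case: c h2 q => h2 q.
  have E : (true, i) = b i by rewrite /b inord_val.
  rewrite E in q; apply: (@ExF_step _ KN _ (b i)); first by apply: RN_ab => //; apply: h2.
  exact: (@ExF_base _ KN KN_total).
have E : (false, i) = a i by rewrite /a inord_val.
rewrite E in q; exact: (@ExF_base _ KN KN_total).
Qed.

Lemma Inv_EF N Q : Inv N Q ->
  Inv N.+1 (fun x => @Ex AP KN x (fun pi => exists i, Q (pi i))).
Proof.
move=> H.
have Ha : forall j, N < j <= n.+1 ->
  (@Ex AP KN (a j) (fun pi => exists i, Q (pi i)) <->
   @Ex AP KN (a n.+1) (fun pi => exists i, Q (pi i))).
  move=> j hj; rewrite !EFa_char //; try lia; split.
    by case=> y [[h1 h2] q]; exists y; split => //; split => //; lia.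
  case=> -[c i] [[/= h1 h2] q].
  case: (leqP i j) => hij; first by exists (c, i).
  have hi := ltn_ord i.
  case: c h2 q => h2 q.
    have E : (true, i) = b i by rewrite /b inord_val.
    rewrite E in q; exists (b j); split; first by rewrite /Rj /= inordK //; lia.
    by apply/(H j hj).2; apply/(H i ltac:(lia)).2.
  have E : (false, i) = a i by rewrite /a inord_val.
  rewrite E in q; exists (a j); split; first by rewrite /Rj /= inordK //; lia.
  by apply/(H j hj).1; apply/(H i ltac:(lia)).1.
have Hb : forall j, j <= n.+1 ->
  (@Ex AP KN (b j) (fun pi => exists i, Q (pi i)) <->
   Q (b j) \/ @Ex AP KN (a (tgt j)) (fun pi => exists i, Q (pi i))).
  move=> j hj; apply: (@ExF_uniq _ KN KN_total); last exact: RN_b.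
  by move=> y; apply: RN_b_inv.
move=> j hj; have ht : N < tgt j <= n.+1 by rewrite /tgt; case: eqP => ?; lia.
have ht' : N < tgt n.+1 <= n.+1 by rewrite /tgt eqxx; lia.
split; first by rewrite Ha //; lia.
rewrite !Hb; try lia.
have [_ h1] := H j ltac:(lia). have h2 := Ha _ ht. have h3 := Ha _ ht'.
move: h1 h2 h3; clear; tauto.
Qed.

End Spec.

Scheme atl_ind2 := Induction for atl Sort Prop
  with atlp_ind2 := Induction for atl_path Sort Prop.

Lemma notiff (A B : Prop) : (A <-> B) -> (~ A <-> ~ B).
Proof. tauto. Qed.

Section Inv.
Variable AP : finType.
Variable p0 : AP.

Definition satN n (x : stN n) (f : atl AP) := @sat AP (cgs_of_kripke (KN p0 n)) x f.
Definition psatN n (pi : nat -> stN n) (P : atl_path AP) :=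
  @psat AP (cgs_of_kripke (KN p0 n)) pi P.

Theorem inv_all (psi : atl AP) :
  exists N, forall n, @Inv n N (fun x => satN x psi).
Proof.
refine (@atl_ind2 AP (fun psi => exists N, forall n, @Inv n N (fun x => satN x psi))
  (fun P => exists N, forall n,
     @Inv n N (fun x => @Ex AP (KN p0 n) x (fun pi => psatN pi P)) /\
     @Inv n N (fun x => @All AP (KN p0 n) x (fun pi => psatN pi P)))
   _ _ _ _ _ _ _ _ _ _ psi).
- move=> p; exists 0 => n j hj; rewrite /satN /=; split; split => //.
- by move=> g [N HN]; exists N => n; apply: Inv_neg.
- move=> g [N HN] h [M HM]; exists (maxn N M) => n.
  by apply: (Inv_bin (op := or)) => //; move=> *; tauto.
- move=> g [N HN] h [M HM]; exists (maxn N M) => n.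
  by apply: (Inv_bin (op := and)) => //; move=> *; tauto.
- move=> g [N HN] h [M HM]; exists (maxn N M) => n.
  by apply: (Inv_bin (op := fun A B => A -> B)) => //; move=> *; tauto.
- move=> A P [N HN]; exists N => n; have [h1 h2] := HN n.
  case: (boolP (0 \in A)) => HA.
    apply: (Inv_ext _ h1) => x; symmetry; move: (coal_in (@KN_total _ p0 n) x (fun pi => psatN pi P) HA) => H; exact H.
  apply: (Inv_ext _ h2) => x; symmetry; exact: (coal_out (@KN_total _ p0 n) x (fun pi => psatN pi P) HA).
- move=> A P [N HN]; exists N => n; have [h1 h2] := HN n.
  case: (boolP (0 \in A)) => HA.
    apply: (Inv_ext _ h2) => x; symmetry; exact: (dual_in (@KN_total _ p0 n) x (fun pi => psatN pi P) HA).
  apply: (Inv_ext _ h1) => x; symmetry; exact: (dual_out (@KN_total _ p0 n) x (fun pi => psatN pi P) HA).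
- move=> g [N HN]; exists N.+1 => n; split.
    apply: (Inv_ext _ (Inv_EX (HN n))) => x; symmetry.
    exact: (ExX (@KN_total _ p0 n) x (fun y => satN y g)).
  apply: (Inv_ext _ (Inv_neg (Inv_EX (Inv_neg (HN n))))) => x.
  rewrite All_Ex; apply: notiff; symmetry.
  exact: (ExX (@KN_total _ p0 n) x (fun y => ~ satN y g)).
- move=> g [N HN]; exists N.+1 => n; split.
    exact: (Inv_EF p0 (HN n)).
  apply: (Inv_ext _ (Inv_neg (Inv_EG p0 (Inv_neg (HN n))))) => x.
  rewrite All_Ex; apply: notiff; apply: Ex_ext => pi.
  by rewrite /psatN /= forallNP.
- move=> g [N HN]; exists N.+1 => n; split.
    exact: (Inv_EG p0 (HN n)).
  apply: (Inv_ext _ (Inv_neg (Inv_EF p0 (Inv_neg (HN n))))) => x.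
  rewrite All_Ex; apply: notiff; apply: Ex_ext => pi.
  by rewrite /psatN /= existsNP.
Qed.

End Inv.

Section Fin.
Variable AP : finType.
Variable p0 : AP.

Lemma B4sup_ge P : B4le B0011 (B4sup P) <-> P B1111 \/ P B0111 \/ P B0011.
Proof.
rewrite /B4sup; case: asboolP => h1; first by split => // _; left.
case: asboolP => h2; first by split => // _; right; left.
case: asboolP => h3; first by split => // _; right; right.
by case: asboolP => h4; split => //; case=> [|[|]].
Qed.

Lemma B4of_ge b1 b2 b3 b4 : B4le B0011 (B4of b1 b2 b3 b4) = [|| b1, b2 | b3].
Proof. by case: b1; case: b2; case: b3; case: b4. Qed.

Definition GF (K : kripke AP) (pi : nat -> kS K) :=
  forall i, exists j, i <= j /\ p0 \in kL (pi j).

Lemma Vp_ge (K : kripke AP) pi :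
  B4le B0011 (Vp K pi (Ralw (Rprop p0))) <-> GF pi.
Proof.
rewrite /= B4of_ge /natmin /natmax; split.
  case/or3P => [/asboolP H | /asboolP [i /asboolP H] | /asboolP H] j.
  - by exists j; split => //; have := H j; case: (p0 \in _).
  - exists (maxn i j); split; first exact: leq_maxr.
    by have := H (maxn i j); rewrite leq_maxl /=; case: (p0 \in _).
  - have /asboolP [k /andP [h1 h2]] := H j; exists k; split => //.
    by move: h2; case: (p0 \in _).
move=> H; apply/or3P; apply: Or33; apply/asboolP => i; apply/asboolP.
by have [j [h1 h2]] := H i; exists j; rewrite h1 h2.
Qed.

Lemma EGF_char (K : kripke AP) s :
  B4le B0011 (Vr K s (Rex (Ralw (Rprop p0)))) <-> exists pi, [/\ kpath pi, pi 0 = s & GF pi].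
Proof.
rewrite /= B4sup_ge; split.
  by case=> [|[|]] [pi [kp ps E]]; exists pi; split => //; apply/(Vp_ge pi); rewrite /= E.
move=> [pi [kp ps H]]; have := (Vp_ge pi).2 H.
case E: (Vp K pi _) => // _; [left|right;left|right;right]; by exists pi.
Qed.


Definition Phi n (x : stN n) := 2 * val x.2 - x.1.
Definition Iv n (x : stN n) := val x.2 <= n /\ (x.1 -> 0 < val x.2).

Lemma step n (x y : stN n) : Iv x -> RN x y ->
  [/\ Iv y, Phi y <= Phi x & (x.1 -> Phi y < Phi x)].
Proof.
case: x => c i [/= h1 h2] r; have hi : (i : nat) <= n.+1 by have := ltn_ord i; lia.
case: c h2 r => h2 r.
  have h2' := h2 isT.
  have E : (true, i) = b n i by rewrite /b inord_val.
  rewrite E in r; rewrite (RN_b_inv hi r) /Iv /Phi /= inordK; have := tgt_le hi;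
  rewrite /tgt; case: eqP => ?; try lia.
  move=> _; split => //; lia.
have E : (false, i) = a n i by rewrite /a inord_val.
rewrite E in r; case: (RN_a_inv hi r) => [->|[->|[h0 ->]]].
- rewrite /Iv /Phi /= inordK; [split => //; lia| lia].
- rewrite /Iv /Phi /= inordK; [split => //; lia| lia].
- rewrite /Iv /Phi /= inordK; [split => //; lia| lia].
Qed.

Lemma noGF n j (pi : nat -> stN n) : j <= n -> kpath (K:=KN p0 n) pi ->
  pi 0 = a n j -> ~ GF (K:=KN p0 n) pi.
Proof.
move=> hj kp P0 H.
have Ivall : forall k, Iv (pi k).
  elim => [|k IH]; first by rewrite P0 /Iv /= inordK //; lia.
  by have [] := step IH (kp k).
have mono : forall k l, k <= l -> Phi (pi l) <= Phi (pi k).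
  move=> k; elim => [|l IH]; first by rewrite leqn0 => /eqP ->.
  rewrite leq_eqVlt => /orP [/eqP -> //|hl].
  have [_ h _] := step (Ivall l) (kp l); have := IH hl; lia.
have dec : forall m, exists k, Phi (pi k) + m <= Phi (pi 0).
  elim => [|m [k hk]]; first by exists 0; rewrite addn0.
  have [l [hl hp]] := H k.
  have hb : (pi l).1 by move: hp; rewrite /= /LN; case: (pi l).1; rewrite ?inE.
  have [_ _ h3] := step (Ivall l) (kp l); have := h3 hb; have := mono k l hl.
  by move=> *; exists l.+1; lia.
by have [k hk] := dec (Phi (pi 0)).+1; lia.
Qed.

Lemma GF_top n : exists pi : nat -> stN n,
  [/\ kpath (K:=KN p0 n) pi, pi 0 = a n n.+1 & GF (K:=KN p0 n) pi].
Proof.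
exists (fun i => if odd i then b n n.+1 else a n n.+1); split => //.
  move=> i /=; case: (odd i) => /=.
    by have := RN_b (leqnn n.+1); rewrite /tgt eqxx.
  exact: RN_ab.
move=> i; exists (i.*2.+1); split; first by rewrite -addnn; lia.
by rewrite /= odd_double /= /LN /= inE.
Qed.

End Fin.

Lemma nob_inj : injective nat_of_bool.
Proof. by case; case. Qed.

Section P1.
Variable AP : finType.
Variable p0 : AP.

Definition CG (c : bool) : cgs AP :=
  {| St := bool; Ag := bool; agname := nat_of_bool; agname_inj := nob_inj;
     Ac := bool; delta := fun s (v : {ffun bool -> bool}) => v c;
     ell := fun x => if x then [set p0] else set0 |}.

Definition Kb (R : rel bool) : kripke AP :=
  {| kS := bool; kI := setT; kR := R; kL := fun x => if x then [set p0] else set0 |}.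

Definition psi1 : atl AP := Acoal [:: 0] (Anext (Aprop p0)).

Lemma succ_true c x y : @successor AP (CG c) x y.
Proof. by apply/existsP; exists [ffun _ => y]; rewrite /= ffunE. Qed.

Lemma part1 : forall (chi : rctl AP) (u : B4),
       ~ (forall (S : cgs AP) (s : St S),
            cgs_total S -> atl_over S psi1 ->
            (sat s psi1 <-> B4le u (Vr (kripke_of_cgs S) s chi))).
Proof.
move=> chi u H.
have tot c : cgs_total (CG c) by move=> s; exists s; exact: succ_true.
have ov c : atl_over (CG c) psi1.
  by move=> k; rewrite /= mem_seq1 => /eqP ->; apply/codomP; exists false.
have ES : @successor AP (CG false) = @successor AP (CG true).
  by apply: funext => x; apply: funext => y; rewrite !succ_true.
have h0 : sat (S:=CG false) false psi1 <->
   B4le u (Vr (Kb (@successor AP (CG false))) false chi) := H (CG false) false (tot _) (ov _).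
have h1 : sat (S:=CG true) false psi1 <->
   B4le u (Vr (Kb (@successor AP (CG true))) false chi) := H (CG true) false (tot _) (ov _).
rewrite ES in h0.
have s0 : sat (S:=CG false) false psi1.
  exists (fun _ _ => true) => pi [P0 Hp]; have [v [Hv E1]] := Hp 0.
  rewrite /= E1 /= Hv ?inE //.
have s1 : ~ sat (S:=CG true) false psi1.
  move=> [F HF].
  suff Ho : out (S:=CG true) false (coal [:: 0]) F (fun _ => false).
    by have := HF _ Ho; rewrite /= inE.
  split => // n.
  exists [ffun a : bool => if a then false else F false (hist (S:=CG true) (fun _ => false) n)].
  split; first by case; rewrite /coal /= ?ffunE.
  by rewrite /= ffunE.
by apply: s1; apply/h1; apply/h0.
Qed.

Lemma part2 : exists (chi : rctl AP) (u : B4),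
     forall psi : atl AP, {subset atl_agents psi <= [:: 0]} ->
       ~ (forall (K : kripke AP) (s : kS K),
            kripke_total K ->
            (@sat AP (cgs_of_kripke K) s psi <-> B4le u (Vr K s chi))).
Proof.
exists (Rex (Ralw (Rprop p0))), B0011 => psi _ H.
have [N HN] := inv_all p0 psi.
have [E _] := HN N.+1 N.+1 ltac:(lia).
have H1 := H (KN p0 N.+1) (a N.+1 N.+1) (@KN_total _ p0 N.+1).
have H2 := H (KN p0 N.+1) (a N.+1 N.+2) (@KN_total _ p0 N.+1).
have T : B4le B0011 (Vr (KN p0 N.+1) (a N.+1 N.+2) (Rex (Ralw (Rprop p0)))).
  apply/EGF_char; exact: GF_top.
have F : ~ B4le B0011 (Vr (KN p0 N.+1) (a N.+1 N.+1) (Rex (Ralw (Rprop p0)))).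
  move/EGF_char => [pi [kp P0 G]]; exact: (noGF (leqnn _) kp P0 G).
rewrite /satN in E.
by apply: F; apply/H1; apply/E; apply/H2.
Qed.
End P1.

Theorem corollary1 (AP : finType) (p0 : AP) :
  (exists psi : atl AP,
     forall (chi : rctl AP) (u : B4),
       ~ (forall (S : cgs AP) (s : St S),
            cgs_total S -> atl_over S psi ->
            (sat s psi <-> B4le u (Vr (kripke_of_cgs S) s chi))))
  /\
  (exists (chi : rctl AP) (u : B4),
     forall psi : atl AP, {subset atl_agents psi <= [:: 0]} ->
       ~ (forall (K : kripke AP) (s : kS K),
            kripke_total K ->
            (@sat AP (cgs_of_kripke K) s psi <-> B4le u (Vr K s chi)))).
Proof. split; [exists (psi1 p0); exact: part1 | exact: part2]. Qed.
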